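(* Let $\mathcal{X}=\bigsqcup_{j=1}^m\mathcal{X}_j$ be a finite partitioned set, $T$ a block-invariant row-stochastic matrix on $\mathcal{X}$, $p_0\in\mathcal{P}(\mathcal{X})$, and $p_{n+1}=p_nT$ for $n=0,\dots,N-1$. Set $q_n:=p_nT$, $D_n:=D_{\mathrm{KL}}(p_n\|q_n)$, $\Delta V_n:=V(p_n)-V(p_{n+1})$, and $\mathcal{S}_n:=D_n+\Delta V_n$, where $V$ is the KL potential relative to $p_0$, and assume $V(p_0)<\infty$. Then $\mathcal{S}_n\ge 0$ for every $n=0,1,\dots,N-1$, and consequently $$\mathcal{S}^{[0:N)}:=\sum_{n=0}^{N-1}\mathcal{S}_n=\sum_{n=0}^{N-1}D_n+V(p_0)-V(p_N)\ \ge 0.$$ Moreover $\mathcal{S}_n=0$ if and only if $D_n=0$ and $\Delta V_n=0$.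
   Context: $\mathcal{P}(\mathcal{X})$ is the set of probability distributions (row vectors) on $\mathcal{X}$. Block invariance: $\sum_{y\in\mathcal{X}_j}T(x,y)=1$ for all $x\in\mathcal{X}_j$, all $j$. $T_j$ is the restriction of $T$ to block $\mathcal{X}_j$, $\mathcal{I}_j=\{\pi\in\mathcal{P}(\mathcal{X}_j):\pi T_j=\pi\}$, $w_j(p)=\sum_{x\in\mathcal{X}_j}p(x)$, $\Pi(p_0)=\{\sum_j w_j(p_0)\pi_j:\pi_j\in\mathcal{I}_j\}$ (each $\pi_j$ extended by zero outside $\mathcal{X}_j$), and the KL potential is $V(p)=\inf_{\pi\in\Pi(p_0)}D_{\mathrm{KL}}(p\|\pi)$. $D_{\mathrm{KL}}(p\|q)=\sum_x p(x)\log\frac{p(x)}{q(x)}$ with $0\log(0/q)=0$, $p\log(p/0)=+\infty$ for $p>0$. *)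

(* Defs.v *)
From HB Require Import structures.
From mathcomp Require Import all_boot all_order all_algebra.
From mathcomp Require Import all_classical all_reals all_analysis.
Set Implicit Arguments. Unset Strict Implicit. Unset Printing Implicit Defensive.
Import Order.TTheory GRing.Theory Num.Theory.
Local Open Scope classical_set_scope.
Local Open Scope ring_scope.

Section KLDefs.
Variables (R : realType) (X : finType).

Definition is_distr (p : X -> R) : Prop :=
  (forall x, 0 <= p x) /\ \sum_(x : X) p x = 1.

Definition row_stochastic (T : X -> X -> R) : Prop :=
  (forall x y, 0 <= T x y) /\ (forall x, \sum_(y : X) T x y = 1).

(* the partition X = ⊔_{j < m} X_j is given by the block map blk : X -> 'I_m,
   X_j = [pred x | blk x == j] *)
Definition block_invariant (m : nat) (blk : X -> 'I_m) (T : X -> X -> R) : Prop :=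
  forall (j : 'I_m) x, blk x = j -> \sum_(y | blk y == j) T x y = 1.

Definition push (p : X -> R) (T : X -> X -> R) : X -> R :=
  fun y => \sum_(x : X) p x * T x y.

Definition kl_term (a b : R) : \bar R :=
  if a == 0 then 0%E else if b == 0 then +oo%E else (a * ln (a / b))%:E.

Definition KL (p q : X -> R) : \bar R := (\sum_(x : X) kl_term (p x) (q x))%E.

Definition wblk (m : nat) (blk : X -> 'I_m) (j : 'I_m) (p : X -> R) : R :=
  \sum_(x | blk x == j) p x.

(* pi ∈ I_j, extended by zero outside X_j: pi is a distribution on X_j
   with pi T_j = pi *)
Definition inv_blk (m : nat) (blk : X -> 'I_m) (T : X -> X -> R) (j : 'I_m)
    (pi : X -> R) : Prop :=
  (forall x, 0 <= pi x) /\ (forall x, blk x != j -> pi x = 0) /\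
  \sum_(x | blk x == j) pi x = 1 /\
  (forall y, blk y = j -> \sum_(x | blk x == j) pi x * T x y = pi y).

Definition PiSet (m : nat) (blk : X -> 'I_m) (T : X -> X -> R) (p0 : X -> R)
  : set (X -> R) :=
  [set pi | exists pis : 'I_m -> X -> R,
     (forall j, inv_blk blk T j (pis j)) /\
     pi = (fun x => \sum_(j < m) wblk blk j p0 * pis j x)].

Definition Vpot (m : nat) (blk : X -> 'I_m) (T : X -> X -> R) (p0 p : X -> R)
  : \bar R :=
  ereal_inf [set KL p pi | pi in PiSet blk T p0].

End KLDefs.

(* Main.v *)
Require Import Defs.
From HB Require Import structures.
From mathcomp Require Import all_boot all_order all_algebra.
From mathcomp Require Import all_classical all_reals all_analysis.
From mathcomp Require Import ring lra.
Set Implicit Arguments. Unset Strict Implicit. Unset Printing Implicit Defensive.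
Import Order.TTheory GRing.Theory Num.Theory.
Local Open Scope classical_set_scope.
Local Open Scope ring_scope.

Definition klr (R : realType) (a b : R) : R := if a == 0 then 0 else a * ln (a / b).

Lemma ln_le_sub1 (R : realType) (x : R) : 0 < x -> ln x <= x - 1.
Proof.
move=> x0. have := expR_ge1Dx (ln x). rewrite lnK ?posrE //. lra.
Qed.

Lemma klr_term (R : realType) (a b r : R) : 0 <= a -> 0 <= b -> 0 < r ->
  (a != 0 -> b != 0) -> a * ln r + a - b * r <= klr a b.
Proof.
move=> a0 b0 r0 ab. rewrite /klr. case: eqP => [->|/eqP an0].
  rewrite !mul0r !add0r oppr_le0. exact: mulr_ge0 (ltW r0).
have bn0 := ab an0.
have ap : 0 < a by rewrite lt_def an0.
have bp : 0 < b by rewrite lt_def bn0.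
set t := b * r / a.
have tp : 0 < t by rewrite /t divr_gt0 // mulr_gt0.
have -> : a / b = r / t by rewrite /t; field; rewrite ?gt_eqF.
rewrite ln_div ?posrE //.
have := ln_le_sub1 tp. have -> : b * r = a * t by rewrite /t; field; rewrite gt_eqF.
move=> H. rewrite mulrBr. have : a * ln t <= a * (t - 1) by rewrite ler_pM2l.
rewrite mulrBr mulr1. lra.
Qed.

Lemma logsum (R : realType) (I : finType) (a b : I -> R) :
  (forall i, 0 <= a i) -> (forall i, 0 <= b i) -> (forall i, a i != 0 -> b i != 0) ->
  klr (\sum_i a i) (\sum_i b i) <= \sum_i klr (a i) (b i).
Proof.
move=> a0 b0 ab.
have A0 : 0 <= \sum_i a i by apply: sumr_ge0.
have B0 : 0 <= \sum_i b i by apply: sumr_ge0.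
case: (eqVneq (\sum_i a i) 0) => [Ae|An].
  rewrite /klr Ae eqxx. rewrite big1 // => i _.
  have /psumr_eq0P := Ae. move=> /(_ (fun i _ => a0 i)) -> //. by rewrite /klr eqxx.
have Bn : \sum_i b i != 0.
  apply: contra An => /eqP Be. apply/eqP. rewrite big1 // => i _.
  have /psumr_eq0P := Be => /(_ (fun i _ => b0 i)) bi.
  by case: (eqVneq (a i) 0) => // /ab; rewrite (bi i isT) eqxx.
set A := \sum_i a i in An A0 *. set B := \sum_i b i in Bn B0 *.
have Ap : 0 < A by rewrite lt_def An.
have Bp : 0 < B by rewrite lt_def Bn.
have rp : 0 < A / B by apply: divr_gt0.
apply: le_trans (ler_sum _ (fun i _ => klr_term (a0 i) (b0 i) rp (@ab i))).
rewrite sumrB big_split /= -!mulr_suml -/A -/B /klr (negbTE An).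
have -> : B * (A / B) = A by field.
lra.
Qed.

Lemma KL_fin (R : realType) (X : finType) (p q : X -> R) :
  (forall x, p x != 0 -> q x != 0) -> KL p q = (\sum_x klr (p x) (q x))%:E.
Proof.
move=> s. rewrite /KL -sumEFin. apply: eq_bigr => x _.
rewrite /kl_term /klr. case: eqP => // /eqP pn. by rewrite (negbTE (s x pn)).
Qed.

Lemma KL_inf (R : realType) (X : finType) (p q : X -> R) x0 :
  p x0 != 0 -> q x0 = 0 -> KL p q = +oo%E.
Proof.
move=> pn q0. rewrite /KL (bigD1 x0) //= /kl_term (negbTE pn) q0 eqxx addye //.
apply: (big_ind (fun y => y != -oo%E)) => //.
  by move=> u v u1 v1; rewrite adde_eq_ninfty negb_or u1 v1.
move=> i _. by case: ifP => // _; case: ifP.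
Qed.

Lemma KL_cases (R : realType) (X : finType) (p q : X -> R) :
  KL p q = +oo%E \/ ((forall x, p x != 0 -> q x != 0) /\ KL p q = (\sum_x klr (p x) (q x))%:E).
Proof.
case: (boolP [forall x, (p x != 0) ==> (q x != 0)]) => [/forallP H|].
  have s : forall x, p x != 0 -> q x != 0 by move=> x; apply/implyP.
  by right; split => //; apply: KL_fin.
rewrite negb_forall => /existsP [x]. rewrite negb_imply negbK => /andP [pn /eqP q0].
by left; apply: (KL_inf pn q0).
Qed.

Lemma KL_ge0 (R : realType) (X : finType) (p q : X -> R) :
  (forall x, 0 <= p x) -> (forall x, 0 <= q x) -> \sum_x p x = \sum_x q x ->
  (0 <= KL p q)%E.
Proof.
move=> p0 q0 e. case: (KL_cases p q) => [->|[s ->]]; first exact: leey.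
rewrite lee_fin. apply: le_trans (logsum p0 q0 s). rewrite e /klr.
case: eqP => // /eqP sn. rewrite divff // ln1 mulr0 //.
Qed.

Lemma klr_scale (R : realType) (a b c : R) : 0 <= c -> klr (a * c) (b * c) = c * klr a b.
Proof.
move=> c0. rewrite /klr. case: (eqVneq c 0) => [->|cn].
  by rewrite mulr0 eqxx mul0r.
rewrite mulf_eq0 (negbTE cn) orbF. case: eqP => [_|_]; first by rewrite mulr0.
case: (eqVneq b 0) => [->|bn]; first by rewrite mul0r !invr0 !mulr0; ring.
have -> : a * c / (b * c) = a / b by rewrite invfM mulrACA divff // mulr1.
ring.
Qed.

Lemma dpi (R : realType) (X : finType) (p q : X -> R) (T : X -> X -> R) :
  (forall x, 0 <= p x) -> (forall x, 0 <= q x) -> row_stochastic T ->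
  (KL (push p T) (push q T) <= KL p q)%E.
Proof.
move=> p0 q0 [T0 T1].
case: (KL_cases p q) => [->|[s ->]]; first exact: leey.
have sT : forall y, push p T y != 0 -> push q T y != 0.
  move=> y. apply: contraNN => /eqP e. apply/eqP.
  have /psumr_eq0P := e. move=> /(_ (fun x _ => mulr_ge0 (q0 x) (T0 x y))) H.
  rewrite /push big1 // => x _. have := H x isT. move/eqP. rewrite mulf_eq0.
  case/orP => /eqP h; last by rewrite h mulr0.
  case: (eqVneq (p x) 0) => [->|/s]; first by rewrite mul0r.
  by rewrite h eqxx.
rewrite (KL_fin sT) lee_fin.
apply: le_trans (_ : \sum_y \sum_x klr (p x * T x y) (q x * T x y) <= _).
  apply: ler_sum => y _. rewrite /push. apply: logsum.
  - by move=> x; apply: mulr_ge0.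
  - by move=> x; apply: mulr_ge0.
  - move=> x. rewrite !mulf_eq0 !negb_or => /andP [pn tn]. by rewrite (s x pn).
rewrite exchange_big /=. apply: ler_sum => x _.
under eq_bigr do rewrite klr_scale //.
by rewrite -mulr_suml T1 mul1r.
Qed.

Lemma T_out (R : realType) (X : finType) m (blk : X -> 'I_m) (T : X -> X -> R) x y :
  row_stochastic T -> block_invariant blk T -> blk y != blk x -> T x y = 0.
Proof.
move=> [T0 T1] Tb ne.
have := T1 x. rewrite (bigID (fun y => blk y == blk x)) /= (Tb (blk x) x erefl).
move=> /eqP. rewrite -subr_eq0 addrAC subrr add0r.
move=> /eqP /(psumr_eq0P (fun y _ => T0 x y)). by apply.
Qed.

Lemma Pi_props (R : realType) (X : finType) m (blk : X -> 'I_m) (T : X -> X -> R) p0 pi :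
  row_stochastic T -> block_invariant blk T -> (forall x, 0 <= p0 x) ->
  PiSet blk T p0 pi ->
  [/\ push pi T = pi, forall x, 0 <= pi x & \sum_x pi x = \sum_x p0 x].
Proof.
move=> Ts Tb p00 [pis [Hinv ->]].
have w0 : forall j, 0 <= wblk blk j p0 by move=> j; apply: sumr_ge0.
split.
- apply: funext => y. rewrite /push.
  under eq_bigr do rewrite mulr_suml. rewrite exchange_big /=.
  apply: eq_bigr => j _. under eq_bigr do rewrite -mulrA. rewrite -mulr_sumr.
  congr (_ * _).
  have [pi0 [pout [psum pfix]]] := Hinv j.
  rewrite (bigID (fun x => blk x == j)) /= [X in _ + X]big1 ?addr0; last first.
    by move=> x /pout ->; rewrite mul0r.
  case: (eqVneq (blk y) j) => [e|ne]; first exact: pfix.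
  rewrite pout // big1 // => x /eqP ex. rewrite (@T_out _ _ _ blk T x y) ?mulr0 //.
  by rewrite ex.
- move=> x. apply: sumr_ge0 => j _. apply: mulr_ge0 => //. by have [] := Hinv j.
- rewrite exchange_big /=. under eq_bigr do rewrite -mulr_sumr.
  transitivity (\sum_(j < m) wblk blk j p0).
    apply: eq_bigr => j _. have [pi0 [pout [psum pfix]]] := Hinv j.
    rewrite (bigID (fun x => blk x == j)) /= [X in _ + X]big1 ?addr0 ?psum ?mulr1 //.
  by rewrite /wblk (partition_big blk predT).
Qed.

Lemma V_ge0 (R : realType) (X : finType) m (blk : X -> 'I_m) (T : X -> X -> R) p0 q :
  row_stochastic T -> block_invariant blk T -> (forall x, 0 <= p0 x) ->
  (forall x, 0 <= q x) -> \sum_x q x = \sum_x p0 x -> (0 <= Vpot blk T p0 q)%E.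
Proof.
move=> Ts Tb p00 q0 e. apply: le_ereal_inf_tmp => _ [pi Hpi <-].
have [_ pi0 ps] := Pi_props Ts Tb p00 Hpi.
apply: KL_ge0 => //. by rewrite e ps.
Qed.

Lemma V_mono (R : realType) (X : finType) m (blk : X -> 'I_m) (T : X -> X -> R) p0 q :
  row_stochastic T -> block_invariant blk T -> (forall x, 0 <= p0 x) ->
  (forall x, 0 <= q x) -> (Vpot blk T p0 (push q T) <= Vpot blk T p0 q)%E.
Proof.
move=> Ts Tb p00 q0. apply: le_ereal_inf_tmp => _ [pi Hpi <-].
have [pf pi0 ps] := Pi_props Ts Tb p00 Hpi.
apply: le_trans (ereal_inf_lbound _) _; first by exists pi.
rewrite -{1}pf. exact: dpi.
Qed.

Lemma tele (R : realType) (v : nat -> R) N : \sum_(n < N) (v n - v n.+1) = v 0%N - v N.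
Proof.
elim: N => [|N IH]; first by rewrite big_ord0 subrr.
rewrite big_ord_recr /= IH. ring.
Qed.

Lemma push_props (R : realType) (X : finType) (T : X -> X -> R) q :
  row_stochastic T -> (forall x, 0 <= q x) ->
  (forall y, 0 <= push q T y) /\ \sum_y push q T y = \sum_x q x.
Proof.
move=> [T0 T1] q0. split.
  by move=> y; apply: sumr_ge0 => x _; apply: mulr_ge0.
rewrite /push exchange_big /=. apply: eq_bigr => x _.
by rewrite -mulr_sumr T1 mulr1.
Qed.

Unset Implicit Arguments.
Theorem theorem2 (R : realType) (X : finType) (m : nat) (blk : X -> 'I_m)
    (T : X -> X -> R) (p0 : X -> R) (N : nat) (p : nat -> X -> R) :
  row_stochastic T -> block_invariant blk T -> is_distr p0 ->
  p 0%N = p0 -> (forall n, (n < N)%N -> p n.+1 = push (p n) T) ->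
  (Vpot blk T p0 p0 < +oo)%E ->
  let D := fun n => KL (p n) (push (p n) T) in
  let dV := fun n => (Vpot blk T p0 (p n) - Vpot blk T p0 (p n.+1))%E in
  let S := fun n => (D n + dV n)%E in
  (forall n, (n < N)%N -> (0 <= S n)%E) /\
  (\sum_(n < N) S n = \sum_(n < N) D n + Vpot blk T p0 p0 - Vpot blk T p0 (p N))%E /\
  (0 <= \sum_(n < N) S n)%E /\
  (forall n, (n < N)%N -> (S n = 0 <-> D n = 0 /\ dV n = 0)%E).
Proof.
move=> Ts Tb [p00 p0s] Hp0 Hstep Vfin D dV S.
have Hp : forall n, (n <= N)%N -> (forall x, 0 <= p n x) /\ \sum_x p n x = \sum_x p0 x.
  elim=> [_|n IH nN]; first by rewrite Hp0.
  have nN' : (n < N)%N by [].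
  have [h1 h2] := IH (ltnW nN'). rewrite (Hstep n nN').
  have [k1 k2] := push_props Ts h1. by rewrite k2.
pose V n := Vpot blk T p0 (p n).
have Vmono : forall n, (n < N)%N -> (V n.+1 <= V n)%E.
  move=> n nN. rewrite /V (Hstep n nN). apply: V_mono => //.
  by have [] := Hp n (ltnW nN).
have Vge0 : forall n, (n <= N)%N -> (0 <= V n)%E.
  move=> n nN. have [h1 h2] := Hp n nN. exact: V_ge0.
have Vle : forall n, (n <= N)%N -> (V n <= V 0%N)%E.
  elim=> [//|n IH nN]. apply: le_trans (Vmono n nN) (IH (ltnW nN)).
have Vf : forall n, (n <= N)%N -> V n = (fine (V n))%:E.
  move=> n nN. rewrite fineK //. apply/fin_numP; split.
    by apply: contraTneq (Vge0 n nN) => ->.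
  by rewrite lt_eqF // (le_lt_trans (Vle n nN)) // /V Hp0.
pose v n := fine (V n).
have dVE : forall n, (n < N)%N -> dV n = (v n - v n.+1)%:E /\ 0 <= v n - v n.+1.
  move=> n nN. rewrite /dV -/(V n) -/(V n.+1) (Vf n (ltnW nN)) (Vf n.+1 nN).
  split => //. rewrite subr_ge0 -lee_fin -(Vf n (ltnW nN)) -(Vf n.+1 nN).
  exact: Vmono.
have Dge0 : forall n, (n < N)%N -> (0 <= D n)%E.
  move=> n nN. have [h1 h2] := Hp n (ltnW nN). have [k1 k2] := push_props Ts h1.
  by apply: KL_ge0 => //; rewrite k2.
have Sge0 : forall n, (n < N)%N -> (0 <= S n)%E.
  move=> n nN. have [dE d0] := dVE n nN. rewrite /S /= dE. by apply: adde_ge0; [exact: Dge0 | rewrite lee_fin].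
split => //. split.
  rewrite /S big_split /=.
  have -> : (\sum_(n < N) dV n = \sum_(n < N) (v n - v n.+1)%:E)%E.
    by apply: eq_bigr => n _; have [] := dVE n (ltn_ord n).
  have V0 : V 0%N = Vpot blk T p0 p0 by rewrite /V Hp0.
  rewrite sumEFin tele EFinB addeA -V0 -/(V N) -(Vf 0%N) // -(Vf N) //.
split; first by apply: sume_ge0 => n _; apply: Sge0.
move=> n nN. have [dE d0] := dVE n nN. split.
  move=> /eqP. rewrite /S padde_eq0 ?Dge0 //; last by rewrite dE lee_fin.
  by move=> /andP [/eqP -> /eqP ->].
by rewrite /S; move=> [-> ->]; rewrite adde0.
Qed.
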